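(* Let $(\mathfrak g,D)$ be a difference Lie algebra over $\mathbb R$. Then the map sending an infinitesimal deformation generated by $(\hat\omega,\hat D)$ to the class $[(\hat\omega,\hat D)]$ induces a bijection between equivalence classes of infinitesimal deformations of $(\mathfrak g,D)$ and the second regular cohomology group $\mathcal H^2(\mathfrak g,D)$.
   Context: A difference Lie algebra $(\mathfrak g,D)$: a Lie algebra $\mathfrak g$ with linear $D$ satisfying $D[x,y]=[x,D(y)]-[y,D(x)]+[D(x),D(y)]$. On $\mathbb R[t]/(t^2)\otimes\mathfrak g$ extend the bracket bilinearly and $D$ linearly over $\mathbb R[t]/(t^2)$. Linear maps $\hat\omega:\wedge^2\mathfrak g\to\mathfrak g$, $\hat D:\mathfrak g\to\mathfrak g$ generate an infinitesimal deformation if $[\cdot,\cdot]_t=[\cdot,\cdot]+t\hat\omega$ is a Lie bracket on $\mathbb R[t]/(t^2)\otimes\mathfrak g$ and $D_t=D+t\hat D$ is a difference operator for it. Two infinitesimal deformations $([\cdot,\cdot]^1_t,D^1_t)$, $([\cdot,\cdot]^2_t,D^2_t)$ are equivalent if there is $N\in\mathrm{Hom}(\mathfrak g,\mathfrak g)$ such that $\varphi_t=\mathrm{Id}+tN$ satisfies $\varphi_t[x,y]^1_t=[\varphi_tx,\varphi_ty]^2_t$ for all $x,y\in\mathfrak g$ and $D^2_t\circ\varphi_t=\varphi_t\circ D^1_t$ as $\mathbb R[t]/(t^2)$-module maps. Regular cohomology: $C^1(\mathfrak g,D)=\mathrm{Hom}(\mathfrak g,\mathfrak g)$, $C^n(\mathfrak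 g,D)=\mathrm{Hom}(\wedge^n\mathfrak g,\mathfrak g)\oplus\mathrm{Hom}(\wedge^{n-1}\mathfrak g,\mathfrak g)$ ($n\ge2$), $\bar\delta(f,\theta)=(d^{CE}_{\mathrm{ad}}f,d^{CE}_{\mathrm{ad}_D}\theta+T(f))$ (for $n=1$, $\bar\delta f=(d^{CE}_{\mathrm{ad}}f,T(f))$), where $d^{CE}_{\mathrm{ad}}$, $d^{CE}_{\mathrm{ad}_D}$ are Chevalley–Eilenberg differentials with coefficients in the adjoint representation and in $\mathrm{ad}_D(x)u=[x,u]+[D(x),u]$, and $T(f)(x_1,\dots,x_n)=(-1)^n\big(\sum_{k=1}^n\sum_{1\le i_1<\cdots<i_k\le n}f(y_1,\dots,y_n)-D(f(x_1,\dots,x_n))\big)$ with $y_j=D(x_j)$ for $j\in\{i_1,\dots,i_k\}$, $y_j=x_j$ otherwise. $\mathcal H^n(\mathfrak g,D)$ is the $n$-th cohomology of this complex. *)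

(* Defs.v *)
From HB Require Import structures.
From mathcomp Require Import all_boot all_algebra.
From mathcomp Require Import reals.
Set Implicit Arguments.
Unset Strict Implicit.
Unset Printing Implicit Defensive.
Import GRing.Theory.
Local Open Scope ring_scope.

Section Defs.
Variables (R : realType) (V : lmodType R).

Definition is_linear (f : V -> V) : Prop :=
  forall (a : R) (x y : V), f (a *: x + y) = a *: f x + f y.

Definition is_bilinear (b : V -> V -> V) : Prop :=
  (forall x, is_linear (b x)) /\ (forall y, is_linear (fun x => b x y)).

Definition alt2 (b : V -> V -> V) : Prop :=
  is_bilinear b /\ (forall x, b x x = 0).

Definition is_lie_bracket (br : V -> V -> V) : Prop :=
  alt2 br /\
  (forall x y z, br x (br y z) + br y (br z x) + br z (br x y) = 0).

Definition diff_op (br : V -> V -> V) (D : V -> V) : Prop :=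
  is_linear D /\
  forall x y, D (br x y) = br x (D y) - br y (D x) + br (D x) (D y).

Definition diff_lie (br : V -> V -> V) (D : V -> V) : Prop :=
  is_lie_bracket br /\ diff_op br D.

(* ---------- R[t]/(t^2) (x) g, modelled as pairs (a, b) = a + t b ---------- *)
(* dual numbers r + t s act by (r + t s)(a + t b) = r a + t (r b + s a) *)
Definition dscale (r s : R) (X : V * V) : V * V :=
  (r *: X.1, r *: X.2 + s *: X.1).
Definition dadd (X Y : V * V) : V * V := (X.1 + Y.1, X.2 + Y.2).

Definition dlinear (f : V * V -> V * V) : Prop :=
  forall r s X Y, f (dadd (dscale r s X) Y) = dadd (dscale r s (f X)) (f Y).

(* [.,.]_t = [.,.] + t om, extended bilinearly over R[t]/(t^2) *)
Definition brt (br om : V -> V -> V) (X Y : V * V) : V * V :=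
  (br X.1 Y.1, br X.1 Y.2 + br X.2 Y.1 + om X.1 Y.1).

(* D_t = D + t Dh, extended linearly over R[t]/(t^2) *)
Definition Dt (D Dh : V -> V) (X : V * V) : V * V :=
  (D X.1, D X.2 + Dh X.1).

Definition dual_lie_bracket (B : V * V -> V * V -> V * V) : Prop :=
  (forall X, dlinear (B X)) /\ (forall Y, dlinear (fun X => B X Y)) /\
  (forall X, B X X = (0, 0)) /\
  (forall X Y Z, dadd (dadd (B X (B Y Z)) (B Y (B Z X))) (B Z (B X Y)) = (0, 0)).

Definition dual_diff_op (B : V * V -> V * V -> V * V) (E : V * V -> V * V) : Prop :=
  dlinear E /\
  forall X Y, E (B X Y) =
    dadd (dadd (B X (E Y)) (dscale (-1) 0 (B Y (E X)))) (B (E X) (E Y)).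

Definition inf_deformation (br : V -> V -> V) (D : V -> V)
    (om : V -> V -> V) (Dh : V -> V) : Prop :=
  alt2 om /\ is_linear Dh /\
  dual_lie_bracket (brt br om) /\ dual_diff_op (brt br om) (Dt D Dh).

(* phi_t = Id + t N, extended linearly *)
Definition phit (N : V -> V) (X : V * V) : V * V := (X.1, X.2 + N X.1).

Definition equiv_deformation (br : V -> V -> V) (D : V -> V)
    (om1 : V -> V -> V) (Dh1 : V -> V) (om2 : V -> V -> V) (Dh2 : V -> V) : Prop :=
  exists N : V -> V, is_linear N /\
    (forall x y : V, phit N (brt br om1 (x, 0) (y, 0)) =
                     brt br om2 (phit N (x, 0)) (phit N (y, 0))) /\
    (forall X : V * V, Dt D Dh2 (phit N X) = phit N (Dt D Dh1 X)).

Definition adD (br : V -> V -> V) (D : V -> V) (x u : V) : V := br x u + br (D x) u.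

Definition dCE1 (br : V -> V -> V) (rho : V -> V -> V) (f : V -> V) (x y : V) : V :=
  rho x (f y) - rho y (f x) - f (br x y).
Definition dCE2 (br : V -> V -> V) (rho : V -> V -> V) (f : V -> V -> V) (x y z : V) : V :=
  rho x (f y z) - rho y (f x z) + rho z (f x y)
  - f (br x y) z + f (br x z) y - f (br y z) x.

Definition T1 (D : V -> V) (f : V -> V) (x : V) : V :=
  - (f (D x) - D (f x)).
Definition T2 (D : V -> V) (f : V -> V -> V) (x y : V) : V :=
  f (D x) y + f x (D y) + f (D x) (D y) - D (f x y).

Definition cochain2 (om : V -> V -> V) (th : V -> V) : Prop :=
  alt2 om /\ is_linear th.

(* 2-cocycles: \bar\delta (om, th) = (d_ad om, d_adD th + T om) = 0 *)
Definition cocycle2 (br : V -> V -> V) (D : V -> V) (om : V -> V -> V) (th : V -> V) : Prop :=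
  cochain2 om th /\
  (forall x y z, dCE2 br br om x y z = 0) /\
  (forall x y, dCE1 br (adD br D) th x y + T2 D om x y = 0).

(* cohomologous 2-cochains: difference is \bar\delta N = (d_ad N, T N), N in C^1 *)
Definition cohomologous (br : V -> V -> V) (D : V -> V)
    (om1 : V -> V -> V) (th1 : V -> V) (om2 : V -> V -> V) (th2 : V -> V) : Prop :=
  exists N : V -> V, is_linear N /\
    (forall x y, om1 x y - om2 x y = dCE1 br br N x y) /\
    (forall x, th1 x - th2 x = T1 D N x).

End Defs.

(* Main.v *)
Require Import Defs.
From mathcomp Require Import all_boot all_algebra.
Set Implicit Arguments. Unset Strict Implicit. Unset Printing Implicit Defensive.
Import GRing.Theory.
Local Open Scope ring_scope.

Inductive zex := ZAtom of nat | ZAdd of zex & zex | ZOpp of zex | ZZero.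

Section ZM.
Variable V : zmodType.
Fixpoint zeval (env : seq V) (e : zex) : V :=
  match e with
  | ZAtom n => nth 0 env n
  | ZAdd a b => zeval env a + zeval env b
  | ZOpp a => - zeval env a
  | ZZero => 0
  end.
Fixpoint vadd (c d : seq int) : seq int :=
  match c, d with
  | [::], _ => d
  | _, [::] => c
  | a :: c', b :: d' => (a + b) :: vadd c' d'
  end.
Definition vopp (c : seq int) := map (fun a => - a) c.
Definition vunit (n : nat) : seq int := rcons (nseq n 0) 1.
Fixpoint evalv (env : seq V) (c : seq int) : V :=
  match env, c with
  | x :: env', a :: c' => x *~ a + evalv env' c'
  | _, _ => 0
  end.
Fixpoint coef (e : zex) : seq int :=
  match e with
  | ZAtom n => vunit n
  | ZAdd a b => vadd (coef a) (coef b)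
  | ZOpp a => vopp (coef a)
  | ZZero => [::]
  end.
Lemma evalv_add env c d : evalv env (vadd c d) = evalv env c + evalv env d.
Proof.
elim: env c d => [|x env IH] [|a c] [|b d] //=; rewrite ?addr0 ?add0r //.
by rewrite IH mulrzDr addrACA.
Qed.
Lemma evalv_opp env c : evalv env (vopp c) = - evalv env c.
Proof.
elim: env c => [|x env IH] [|a c] //=; rewrite ?oppr0 //.
by rewrite IH mulrNz opprD.
Qed.
Lemma evalv_unit env n : evalv env (vunit n) = nth 0 env n.
Proof.
elim: env n => [|x env IH] [|n] //=.
- by rewrite mulr1z; case: env {IH} => //= *; rewrite addr0.
- by rewrite IH mulr0z add0r.
Qed.
Lemma zeval_coef env e : zeval env e = evalv env (coef e).
Proof.
elim: e => [n|a IHa b IHb|a IHa|] /=.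
- by rewrite evalv_unit.
- by rewrite evalv_add IHa IHb.
- by rewrite evalv_opp IHa.
- by case: env.
Qed.
Lemma evalv_zero env c : all (fun a => a == 0) c -> evalv env c = 0.
Proof.
elim: env c => [|x env IH] [|a c] //= /andP[/eqP-> /IH ->].
by rewrite mulr0z addr0.
Qed.
Lemma zmod_sound env e1 e2 :
  all (fun a => a == 0) (vadd (coef e1) (vopp (coef e2))) ->
  zeval env e1 = zeval env e2.
Proof.
move=> /(evalv_zero env); rewrite evalv_add evalv_opp -!zeval_coef => /eqP.
by rewrite subr_eq0 => /eqP.
Qed.
End ZM.

Ltac zlookup x env :=
  lazymatch env with
  | x :: _ => constr:(0%N)
  | _ :: ?e => let n := zlookup x e in constr:(S n)
  end.
Ltac zmem t l :=
  lazymatch l with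
  | t :: _ => constr:(true)
  | _ :: ?l' => zmem t l'
  | _ => constr:(false)
  end.
Ltac zcollect t acc :=
  lazymatch t with
  | @GRing.add _ ?a ?b => let acc := zcollect a acc in zcollect b acc
  | @GRing.opp _ ?a => zcollect a acc
  | @GRing.zero _ => acc
  | _ => let b := zmem t acc in
         lazymatch b with
         | true => acc
         | false => constr:(t :: acc)
         end
  end.
Ltac zreify t env :=
  lazymatch t with
  | @GRing.add _ ?a ?b => let x := zreify a env in let y := zreify b env in constr:(ZAdd x y)
  | @GRing.opp _ ?a => let x := zreify a env in constr:(ZOpp x)
  | @GRing.zero _ => constr:(ZZero)
  | _ => let n := zlookup t env in constr:(ZAtom n)
  end.
Ltac zmod :=
  lazymatch goal with
  | |- @eq ?T ?l ?r =>
    let env := zcollect l (@nil T) in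
    let env := zcollect r env in
    let el := zreify l env in
    let er := zreify r env in
    change (zeval env el = zeval env er);
    apply: zmod_sound; vm_compute; reflexivity
  end.

From mathcomp Require Import reals.
Require Import Defs.
Section Main.
Variables (R : realType) (V : lmodType R).
Implicit Types (x y z : V).

Lemma useH x y (a b : V) : a = b -> x = y + (a - b) -> x = y.
Proof. by move=> ->; rewrite subrr addr0. Qed.
Lemma useHn x y (a b : V) : a = b -> x = y - (a - b) -> x = y.
Proof. by move=> ->; rewrite subrr subr0. Qed.

Section Lin.
Variable f : V -> V.
Hypothesis Hf : is_linear f.
Lemma linD x y : f (x + y) = f x + f y.
Proof. by have := Hf 1 x y; rewrite !scale1r. Qed.
Lemma lin0 : f 0 = 0.
Proof. by apply: (addrI (f 0)); rewrite -linD !addr0. Qed.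
Lemma linZ (a : R) x : f (a *: x) = a *: f x.
Proof. by have := Hf a x 0; rewrite !addr0 lin0 addr0. Qed.
Lemma linN x : f (- x) = - f x.
Proof. by rewrite -scaleN1r linZ scaleN1r. Qed.
End Lin.

Section Bil.
Variable b : V -> V -> V.
Hypothesis Hb : is_bilinear b.
Lemma bDr x y z : b x (y + z) = b x y + b x z.
Proof. exact: (linD (Hb.1 x)). Qed.
Lemma bDl x y z : b (x + y) z = b x z + b y z.
Proof. exact: (linD (Hb.2 z)). Qed.
Lemma bZr (a : R) x y : b x (a *: y) = a *: b x y.
Proof. exact: (linZ (Hb.1 x)). Qed.
Lemma bZl (a : R) x y : b (a *: x) y = a *: b x y.
Proof. exact: (linZ (Hb.2 y)). Qed.
Lemma b0r x : b x 0 = 0.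
Proof. exact: (lin0 (Hb.1 x)). Qed.
Lemma b0l x : b 0 x = 0.
Proof. exact: (lin0 (Hb.2 x)). Qed.
Lemma bNr x y : b x (- y) = - b x y.
Proof. exact: (linN (Hb.1 x)). Qed.
Lemma bNl x y : b (- x) y = - b x y.
Proof. exact: (linN (Hb.2 y)). Qed.
End Bil.

Lemma altA b : alt2 b -> forall x y, b x y = - b y x.
Proof.
move=> [Hb Hxx] x y; apply/eqP; rewrite -subr_eq0 opprK; apply/eqP.
by have := Hxx (x + y); rewrite (bDl Hb) !(bDr Hb) !Hxx add0r addr0.
Qed.


Lemma dCE2_cyc br om (Hbr : alt2 br) (Hom : alt2 om) x y z :
  dCE2 br br om x y z = br x (om y z) + om x (br y z) + (br y (om z x) + om y (br z x))
    + (br z (om x y) + om z (br x y)).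
Proof.
rewrite /dCE2 (altA Hom x z) (bNr Hbr.1) (altA Hom (br x y) z) (altA Hom (br x z) y).
rewrite (altA Hbr x z) (bNr Hom.1) (altA Hom (br y z) x).
zmod.
Qed.

Lemma cocyc_conv br (D : V -> V) om (Dh : V -> V) (Hbr : alt2 br) (Hom : alt2 om) x y :
  dCE1 br (adD br D) Dh x y + T2 D om x y =
  (br x (Dh y) + om x (D y) - (br y (Dh x) + om y (D x))
    + (br (D x) (Dh y) + br (Dh x) (D y) + om (D x) (D y)))
  - (D (om x y) + Dh (br x y)).
Proof.
rewrite /dCE1 /adD /T2 (altA Hbr (D y) (Dh x)) (altA Hom (D x) y).
zmod.
Qed.

End Main.

Unset Implicit Arguments.
Ltac z1 H := first [apply: (useH H); zmod | apply: (useHn H); zmod].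
Ltac z2 H1 H2 := first [apply: (useH H1); z1 H2 | apply: (useHn H1); z1 H2].
Ltac z3 H1 H2 H3 := first [apply: (useH H1); z2 H2 H3 | apply: (useHn H1); z2 H2 H3].
Ltac z4 H1 H2 H3 H4 := first [apply: (useH H1); z3 H2 H3 H4 | apply: (useHn H1); z3 H2 H3 H4].

Theorem theorem4p6 (R : realType) (V : lmodType R)
    (br : V -> V -> V) (D : V -> V) (HgD : diff_lie br D) :
  (forall (om : V -> V -> V) (Dh : V -> V),
      inf_deformation br D om Dh -> cocycle2 br D om Dh) /\
  (forall (om : V -> V -> V) (Dh : V -> V),
      cocycle2 br D om Dh -> inf_deformation br D om Dh) /\
  (forall (om1 : V -> V -> V) (Dh1 : V -> V) (om2 : V -> V -> V) (Dh2 : V -> V),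
      inf_deformation br D om1 Dh1 -> inf_deformation br D om2 Dh2 ->
      (equiv_deformation br D om1 Dh1 om2 Dh2 <-> cohomologous br D om1 Dh1 om2 Dh2)).
Proof.
case: HgD => [[Halt Hjac] [HDl HDop]].
have Hb := Halt.1.
split; [|split].
- move=> om Dh [Homa [HDh [[_ [_ [_ HJ]]] [_ HDt]]]].
  have Hob := Homa.1.
  split; first by split.
  split.
  + move=> x y z; rewrite dCE2_cyc //.
    have := HJ (x, 0) (y, 0) (z, 0); rewrite /brt /dadd /= => /(congr1 snd) /=.
    rewrite !(b0r Hb) !(b0l Hb) !add0r => H.
    z1 H.
  + move=> x y; rewrite cocyc_conv //.
    have := HDt (x, 0) (y, 0); rewrite /brt /Dt /dadd /dscale /= => /(congr1 snd) /=.
    rewrite !(b0r Hb) !(b0l Hb) !(lin0 HDl) !add0r !addr0 scale0r addr0 scaleN1r => H.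
    z1 H.
- move=> om Dh [[Homa HDh] [Hc2 Hc1]].
  have Hob := Homa.1.
  do 2 (split; first by []).
  split; [split; [|split; [|split]] | split].
  + move=> [x1 x2] r s [y1 y2] [z1 z2]; rewrite /brt /dadd /dscale /=.
    congr pair; rewrite ?(bDr Hb) ?(bZr Hb) ?(bDr Hob) ?(bZr Hob) ?scalerDr; zmod.
  + move=> [y1 y2] r s [x1 x2] [z1 z2]; rewrite /brt /dadd /dscale /=.
    congr pair; rewrite ?(bDl Hb) ?(bZl Hb) ?(bDl Hob) ?(bZl Hob) ?scalerDr; zmod.
  + move=> [x1 x2]; rewrite /brt /=; congr pair; first exact: Halt.2.
    by rewrite (altA Halt x2 x1) Homa.2 addr0 subrr.
  + move=> [x1 x2] [y1 y2] [z1 z2]; rewrite /brt /dadd /=; congr pair; first exact: Hjac.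
    have H4 := Hc2 x1 y1 z1; rewrite dCE2_cyc // in H4.
    rewrite !(bDr Hb).
    z4 (Hjac x1 y1 z2) (Hjac x1 y2 z1) (Hjac x2 y1 z1) H4.
  + move=> r s [x1 x2] [y1 y2]; rewrite /Dt /dadd /dscale /=.
    congr pair; rewrite ?(linD HDl) ?(linD HDh) ?(linZ HDl) ?(linZ HDh) ?scalerDr; zmod.
  + move=> [x1 x2] [y1 y2]; rewrite /Dt /brt /dadd /dscale /=.
    congr pair; first by rewrite scaleN1r; exact: HDop.
    have H3 := Hc1 x1 y1; rewrite cocyc_conv // in H3.
    move/eqP: H3; rewrite subr_eq0 => /eqP H3.
    rewrite scale0r addr0 scaleN1r !(linD HDl) ?(linD HDh) !(bDr Hb) !(bDl Hb).
    z3 (HDop x1 y2) (HDop x2 y1) H3.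
- move=> om1 Dh1 om2 Dh2 _ _; split.
  + move=> [N [HN [Hbr HDD]]]; exists N; split; first by [].
    split.
    * move=> x y; have := Hbr x y; rewrite /phit /brt /= => /(congr1 snd) /=.
      rewrite !(b0r Hb) !(b0l Hb) !add0r => H.
      rewrite /dCE1 (altA Halt y (N x)); z1 H.
    * move=> x; have := HDD (x, 0); rewrite /phit /Dt /= => /(congr1 snd) /=.
      rewrite !add0r (lin0 HDl) add0r => H.
      rewrite /T1; z1 H.
  + move=> [N [HN [H1 H2]]]; exists N; split; first by [].
    split.
    * move=> x y; rewrite /phit /brt /=; congr pair.
      rewrite !(b0r Hb) !(b0l Hb) !add0r.
      have H := H1 x y; rewrite /dCE1 (altA Halt y (N x)) in H.
      z1 H.
    * move=> [x1 x2]; rewrite /phit /Dt /=; congr pair.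
      have H := H2 x1; rewrite /T1 in H.
      rewrite (linD HDl); z1 H.
Qed.
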